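(* Let $\theta_0,\alpha_0>0$, let $S_n=\{\mathbf s_1,\dots,\mathbf s_n\}$ be distinct points in $[0,1]^d$, and suppose Assumption A2 (stated in the context) holds. For $\alpha>0$ let $\lambda_{1,n}(\alpha),\dots,\lambda_{n,n}(\alpha)$ be the eigenvalues of $K_{\alpha_0,\nu}(S_n)^{-1}K_{\alpha,\nu}(S_n)$. Then for every $\alpha$ with $|\alpha/\alpha_0-1|\le r_0$ and every $k=1,\dots,n$, $$1-L|\alpha/\alpha_0-1|^\kappa\le\lambda_{k,n}(\alpha)\le1+L|\alpha/\alpha_0-1|^\kappa.$$ Furthermore, if $\alpha\le\alpha_0$ then $\lambda_{k,n}(\alpha)\ge1$ for all $k$, and if $\alpha\ge\alpha_0$ then $0\le\lambda_{k,n}(\alpha)\le1$ for all $k$.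
   Context: $K_{\alpha,\nu}:\mathbb R^d\to\mathbb R$ ($\alpha>0$) is a family of positive definite functions, $K_{\alpha,\nu}(S_n)$ the $n\times n$ matrix with entries $K_{\alpha,\nu}(\mathbf s_i-\mathbf s_j)$, and $f_{\theta,\alpha,\nu}(w)=(2\pi)^{-d}\int e^{-\imath w^Tx}\theta K_{\alpha,\nu}(x)dx$ the spectral density of $\theta K_{\alpha,\nu}$. (Equivalently, the $\lambda_{k,n}(\alpha)$ are the diagonal entries of $\Lambda_n(\alpha)$ where an invertible $U_\alpha$ satisfies $\theta_0U_\alpha^TK_{\alpha_0,\nu}(S_n)U_\alpha=I_n$ and $\theta_0U_\alpha^TK_{\alpha,\nu}(S_n)U_\alpha=\Lambda_n(\alpha)$ diagonal.) Assumption A2: (i) there exist $L>0$, $r_0\in(0,1/2)$, $\kappa>0$ such that $\sup_w|f_{\theta_0,\alpha,\nu}(w)/f_{\theta_0,\alpha_0,\nu}(w)-1|\le L|\alpha/\alpha_0-1|^\kappa$ whenever $|\alpha/\alpha_0-1|\le r_0$; (ii) $f_{\theta,\alpha,\nu}(w)$ is non-increasing in $\alpha$ for each $\theta>0$, $w\in\mathbb R^d$. *)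

(* Defs.v *)
From HB Require Import structures.
From mathcomp Require Import all_boot all_order all_algebra.
From mathcomp Require Import all_classical all_reals all_analysis.
Set Implicit Arguments. Unset Strict Implicit. Unset Printing Implicit Defensive.
Import Order.TTheory GRing.Theory Num.Theory.
Import numFieldNormedType.Exports.
Local Open Scope classical_set_scope.
Local Open Scope ring_scope.

(* Points of R^d are represented as d.-tuples of reals
   (these carry MathComp-Analysis' product sigma-algebra). *)

Definition tsub (R : realType) (d : nat) (x y : d.-tuple R) : d.-tuple R :=
  [tuple tnth x i - tnth y i | i < d].

Definition tdot (R : realType) (d : nat) (w x : d.-tuple R) : R :=
  \sum_(i < d) tnth w i * tnth x i.

(* Integral over R^d w.r.t. Lebesgue measure, written as the iterated
   (real-valued) Lebesgue integral  int dw_1 ... int dw_d g(w);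
   by Fubini this is the Lebesgue integral on R^d for integrable g. *)
Fixpoint iint (R : realType) (d : nat) : (d.-tuple R -> R) -> R :=
  match d return (d.-tuple R -> R) -> R with
  | 0 => fun g => g [tuple]
  | d'.+1 => fun g =>
      Rintegral (@lebesgue_measure R) setT
        (fun x : R => @iint R d' (fun t => g (cons_tuple x t)))
  end.

(* Iterated extended-real integral (Tonelli) for nonnegative integrands. *)
Fixpoint iintE (R : realType) (d : nat) : (d.-tuple R -> \bar R) -> \bar R :=
  match d return (d.-tuple R -> \bar R) -> \bar R with
  | 0 => fun g => g [tuple]
  | d'.+1 => fun g =>
      (\int[@lebesgue_measure R]_(x in setT)
         @iintE R d' (fun t => g (cons_tuple x t)))%E
  end.

Definition covmx (R : realType) (d n : nat) (C : d.-tuple R -> R)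
  (s : 'I_n -> d.-tuple R) : 'M[R]_n :=
  \matrix_(i, j) C (tsub (s i) (s j)).

Definition posdef_fun (R : realType) (d : nat) (C : d.-tuple R -> R) : Prop :=
  forall (m : nat) (s : 'I_m -> d.-tuple R), injective s ->
  forall c : 'cV[R]_m, c != 0 -> 0 < (c^T *m covmx C s *m c) ord0 ord0.

(* g is the spectral density of the (real, stationary) covariance C:
   g is a nonnegative Lebesgue-integrable function on R^d with
   C(x) = int e^{i w^T x} g(w) dw, the complex identity being split into
   its real and imaginary parts. *)
Definition spectral_density (R : realType) (d : nat)
  (C : d.-tuple R -> R) (g : d.-tuple R -> R) : Prop :=
  [/\ forall w, 0 <= g w,
      measurable_fun setT g,
      (iintE (fun w => (g w)%:E) < +oo)%E,
      forall x, C x = iint (fun w => cos (tdot w x) * g w)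
    & forall x, iint (fun w => sin (tdot w x) * g w) = 0].

(* Main.v *)
Require Import Defs.
From HB Require Import structures.
From mathcomp Require Import all_boot all_order all_algebra.
From mathcomp Require Import all_classical all_reals all_analysis.
From mathcomp Require Import measurable_realfun.
From mathcomp Require Import ring lra.
Import Order.TTheory GRing.Theory Num.Theory.
Import numFieldNormedType.Exports.
Local Open Scope classical_set_scope.
Local Open Scope ring_scope.

Set Implicit Arguments. Unset Strict Implicit. Unset Printing Implicit Defensive.
Section Aux.
Variable R : realType.
Local Notation leb := (@lebesgue_measure R).

Lemma Rint_meas dX (X : measurableType dX) (G : X * R -> R) :
  measurable_fun setT G ->
  measurable_fun setT (fun x => Rintegral leb setT (fun y => G (x, y))).
Proof.
move=> mG; rewrite /Rintegral.
apply: (measurableT_comp (fine_measurable measurableT)).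
have -> : (fun x => (\int[leb]_(y in setT) (G (x, y))%:E)%E) =
  (fun x => fubini_F leb ((EFin \o G)^\+) x - fubini_F leb ((EFin \o G)^\-) x)%E.
  rewrite funeqE => x; rewrite [LHS]integralE /fubini_F.
  by congr (_ - _)%E; apply: eq_integral => y _; rewrite ?funeposE ?funenegE.
have mGE : measurable_fun [set: (X * measurableTypeR R)%type] (EFin \o G) by exact/measurable_EFinP.
have m1 : measurable_fun setT (fubini_F leb ((EFin \o G)^\+)%E).
  apply: (measurable_fun_fubini_tonelli_F _ (measurable_funepos mGE)).
  by move=> p; exact: funepos_ge0.
have m2 : measurable_fun setT (fubini_F leb ((EFin \o G)^\-)%E).
  apply: (measurable_fun_fubini_tonelli_F _ (measurable_funeneg mGE)).
  by move=> p; exact: funeneg_ge0.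
exact: emeasurable_funB m1 m2.
Qed.

Lemma Eint_meas dX (X : measurableType dX) (G : X * R -> \bar R) :
  measurable_fun setT G -> (forall p, (0 <= G p)%E) ->
  measurable_fun setT (fun x => (\int[leb]_(y in setT) G (x, y))%E).
Proof.
move=> mG G0.
have mG' : measurable_fun [set: (X * measurableTypeR R)%type] G := mG.
exact: (@measurable_fun_fubini_tonelli_F _ _ _ _ _ leb G mG' G0).
Qed.

Lemma cons_meas dX (X : measurableType dX) d (h : X * d.+1.-tuple R -> R) :
  measurable_fun setT h ->
  measurable_fun [set: (X * R) * d.-tuple R]
    (fun p => h (p.1.1, cons_tuple p.1.2 p.2)).
Proof.
move=> mh; apply: (measurableT_comp mh).
apply: measurable_fun_pair.
  exact: (measurableT_comp measurable_fst measurable_fst).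
apply: (@measurable_cons _ _ _ _ (fun p : (X * R) * d.-tuple R => p.1.2) d
  (fun p => p.2)).
  exact: (measurableT_comp measurable_snd measurable_fst).
exact: measurable_snd.
Qed.

Lemma consE_meas dX (X : measurableType dX) d (h : X * d.+1.-tuple R -> \bar R) :
  measurable_fun setT h ->
  measurable_fun [set: (X * R) * d.-tuple R]
    (fun p => h (p.1.1, cons_tuple p.1.2 p.2)).
Proof.
move=> mh; apply: (measurableT_comp mh).
apply: measurable_fun_pair.
  exact: (measurableT_comp measurable_fst measurable_fst).
apply: (@measurable_cons _ _ _ _ (fun p : (X * R) * d.-tuple R => p.1.2) d
  (fun p => p.2)).
  exact: (measurableT_comp measurable_snd measurable_fst).
exact: measurable_snd.
Qed.

Lemma iint_meas d : forall dX (X : measurableType dX) (h : X * d.-tuple R -> R),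
  measurable_fun setT h -> measurable_fun setT (fun x => iint (fun t => h (x, t))).
Proof.
elim: d => [|d IH] dX X h mh /=.
  apply: (measurableT_comp mh).
  exact: measurable_fun_pair.
have := IH _ _ _ (@cons_meas _ _ _ _ mh).
exact: Rint_meas.
Qed.

Lemma iintE_ge0 d (h : d.-tuple R -> \bar R) :
  (forall t, (0 <= h t)%E) -> (0 <= iintE h)%E.
Proof.
elim: d h => [|d IH] h h0 /=; first exact: h0.
by apply: integral_ge0 => x _; apply: IH.
Qed.

Lemma iint_ge0 d (h : d.-tuple R -> R) :
  (forall t, 0 <= h t) -> 0 <= iint h.
Proof.
elim: d h => [|d IH] h h0 /=; first exact: h0.
rewrite /Rintegral; apply: fine_ge0; apply: integral_ge0 => x _.
by rewrite lee_fin; apply: IH.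
Qed.

Lemma iintE_meas d : forall dX (X : measurableType dX) (h : X * d.-tuple R -> \bar R),
  measurable_fun setT h -> (forall p, (0 <= h p)%E) ->
  measurable_fun setT (fun x => iintE (fun t => h (x, t))).
Proof.
elim: d => [|d IH] dX X h mh h0 /=.
  apply: (measurableT_comp mh).
  exact: measurable_fun_pair.
have := IH _ _ _ (@consE_meas _ _ _ _ mh) (fun p => h0 _).
move=> H; apply: (@Eint_meas _ _ _ H) => p.
exact: iintE_ge0.
Qed.

Lemma sect2_meas d dU (U : measurableType dU) (h : d.+1.-tuple R -> U) :
  measurable_fun setT h ->
  measurable_fun [set: R * d.-tuple R] (fun p => h (cons_tuple p.1 p.2)).
Proof.
move=> mh; apply: (measurableT_comp mh).
apply: (@measurable_cons _ _ _ _ (fun p : R * d.-tuple R => p.1) d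
  (fun p => p.2)); [exact: measurable_fst | exact: measurable_snd].
Qed.

Lemma sect_meas d dU (U : measurableType dU) (h : d.+1.-tuple R -> U) (x : R) :
  measurable_fun setT h ->
  measurable_fun [set: d.-tuple R] (fun t => h (cons_tuple x t)).
Proof.
move=> mh; apply: (measurableT_comp mh).
apply: (@measurable_cons _ _ _ _ (fun _ : d.-tuple R => x) d (fun t => t)).
  exact: measurable_cst.
exact: measurable_id.
Qed.

Lemma iintE_mono d (h1 h2 : d.-tuple R -> \bar R) :
  measurable_fun setT h1 -> measurable_fun setT h2 ->
  (forall t, (0 <= h1 t)%E) -> (forall t, (h1 t <= h2 t)%E) ->
  (iintE h1 <= iintE h2)%E.
Proof.
elim: d h1 h2 => [|d IH] h1 h2 m1 m2 h10 h12 /=; first exact: h12.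
have h20 t : (0 <= h2 t)%E by apply: le_trans (h12 t).
apply: ge0_le_integral => //.
- by move=> x _; apply: iintE_ge0 => t.
- exact: (iintE_meas (sect2_meas m1) (fun p => h10 _)).
- exact: (iintE_meas (sect2_meas m2) (fun p => h20 _)).
- move=> x _; apply: IH => //; exact: sect_meas.
Qed.

Lemma abse_fine_le (e : \bar R) : (`|fine e|%:E <= `|e|)%E.
Proof. by case: e => [r| |] /=; rewrite ?normr0 ?lexx ?leey. Qed.

Lemma iint_bound d (h : d.-tuple R -> R) :
  measurable_fun setT h ->
  (`|iint h|%:E <= iintE (fun t => `|h t|%:E))%E.
Proof.
elim: d h => [|d IH] h mh /=; first by [].
rewrite /Rintegral.
have mG : measurable_fun setT (fun x => iint (fun t => h (cons_tuple x t))).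
  exact: (iint_meas (sect2_meas mh)).
apply: (le_trans (abse_fine_le _)).
apply: (le_trans (le_abse_integral _ _ _)) => //.
  exact/measurable_EFinP.
apply: ge0_le_integral => //.
- apply: measurableT_comp => //; exact/measurable_EFinP.
- apply: (iintE_meas (h := fun p => `|h (cons_tuple p.1 p.2)|%:E)) => //.
  apply/measurable_EFinP; apply: measurableT_comp => //.
  exact: sect2_meas.
- move=> x _; apply: IH; exact: sect_meas.
Qed.

Lemma Rint_sum (I : finType) (a : I -> R) (G : I -> R -> R) :
  (forall i, leb.-integrable setT (EFin \o G i)) ->
  Rintegral leb setT (fun x => \sum_i a i * G i x) =
  \sum_i a i * Rintegral leb setT (G i).
Proof.
move=> iG.
have iaG i : leb.-integrable setT (EFin \o (fun x => a i * G i x)).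
  have -> : EFin \o (fun x => a i * G i x) = (fun x => (a i)%:E * (EFin \o G i) x)%E.
    by apply/funext => x.
  exact: integrableZl.
under [RHS]eq_bigr do rewrite -RintegralZl //.
rewrite /Rintegral.
transitivity (fine (\sum_i \int[leb]_(x in setT) ((a i * G i x)%:E))%E).
  congr fine; rewrite -integral_sum //.
  by apply: eq_integral => x _; rewrite sumEFin.
rewrite -(EFin_sum_fine _ (fun i _ => integrable_fin_num measurableT (iaG i))) /=.
by [].
Qed.

Definition Pint d (h : d.-tuple R -> R) :=
  measurable_fun setT h /\ (iintE (fun t => `|h t|%:E) < +oo)%E.

Lemma iint_lin d (I : finType) (a : I -> R) (h : I -> d.-tuple R -> R) :
  (forall i, Pint (h i)) ->
  iint (fun t => \sum_i a i * h i t) = \sum_i a i * iint (h i).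
Proof.
elim: d h => [|d IH] h hP /=; first by [].
pose G i x := iint (fun t => h i (cons_tuple x t)).
have mG i : measurable_fun [set: measurableTypeR R] (G i) := iint_meas (sect2_meas (hP i).1).
have mA i : measurable_fun setT (fun x => iintE (fun t => `|h i (cons_tuple x t)|%:E)).
  apply: (iintE_meas (h := fun p => `|h i (cons_tuple p.1 p.2)|%:E)) => //.
  apply/measurable_EFinP; apply: measurableT_comp => //.
  exact: sect2_meas (hP i).1.
have iG i : leb.-integrable setT (EFin \o G i).
  apply/integrableP; split; first exact/measurable_EFinP.
  apply: le_lt_trans (hP i).2 => /=.
  apply: ge0_le_integral => //.
  - apply: measurableT_comp => //; apply: measurableT_comp => //; exact: mG.
  - exact: mA.
  - move=> x _; apply: iint_bound; exact: sect_meas (hP i).1.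
have ae : \forall x \ae leb, forall i, Pint (fun t => h i (cons_tuple x t)).
  apply: filter_forall => i.
  have : leb.-integrable setT (fun x => iintE (fun t => `|h i (cons_tuple x t)|%:E)).
    apply/integrableP; split; first exact: mA.
    under eq_integral do rewrite gee0_abs ?iintE_ge0//.
    exact: (hP i).2.
  move/integrable_ae => /(_ measurableT); apply: filterS => x /(_ Logic.I) fin.
  split; first exact: sect_meas (hP i).1.
  by rewrite ltey_eq fin.
have ae2 : \forall x \ae leb, iint (fun t => \sum_i a i * h i (cons_tuple x t)) =
    \sum_i a i * G i x.
  by move: ae; apply: (@filterS _ _ (ae_filter_ringOfSetsType leb)) => x Hx; exact: IH.
rewrite -Rint_sum //.
rewrite /Rintegral; congr fine.
apply: ae_eq_integral => //.
- apply/measurable_EFinP.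
  apply: (iint_meas (h := fun p => \sum_i a i * h i (cons_tuple p.1 p.2))).
  apply: measurable_sum => i; apply: measurable_funM => //.
  exact: sect2_meas (hP i).1.
- apply/measurable_EFinP.
  apply: measurable_sum => i; apply: measurable_funM => //; exact: mG.
- rewrite /ae_eq; move: ae2.
  by apply: (@filterS _ _ (ae_filter_ringOfSetsType leb)) => x /= -> _.
Qed.

Lemma tdot_meas d (x : d.-tuple R) : measurable_fun setT (fun w : d.-tuple R => tdot w x).
Proof.
rewrite /tdot; apply: measurable_sum => i; apply: measurable_funM => //.
exact: measurable_tnth.
Qed.

Lemma Pint_cos d (f : d.-tuple R -> R) (x : d.-tuple R) :
  (forall w, 0 <= f w) -> measurable_fun setT f ->
  (iintE (fun w => (f w)%:E) < +oo)%E ->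
  Pint (fun w => cos (tdot w x) * f w).
Proof.
move=> f0 mf fi.
have mc : measurable_fun setT (fun w => cos (tdot w x) * f w).
  apply: measurable_funM => //; apply: measurableT_comp (tdot_meas x).
  exact: continuous_measurable_fun (@continuous_cos R).
split => //.
apply: le_lt_trans fi; apply: iintE_mono.
- apply/measurable_EFinP; exact: measurableT_comp.
- exact/measurable_EFinP.
- by move=> t.
- move=> t; rewrite lee_fin normrM (ger0_norm (f0 t)).
  by rewrite ler_piMl // cos_max.
Qed.

Definition qf n (u : 'rV[R]_n) (C : 'M[R]_n) :=
  \sum_(j < n) \sum_(k < n) u 0 j * u 0 k * C j k.

Lemma qfE n (u : 'rV[R]_n) (C : 'M[R]_n) : (u *m C *m u^T) 0 0 = qf u C.
Proof.
rewrite /qf mxE; under eq_bigr do rewrite !mxE mulr_suml.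
rewrite exchange_big /=; apply: eq_bigr => j _; apply: eq_bigr => k _.
by rewrite ?mxE; ring.
Qed.

Lemma tdotB d (w x y : d.-tuple R) : tdot w (tsub x y) = tdot w x - tdot w y.
Proof.
rewrite /tdot /tsub -sumrB; apply: eq_bigr => i _.
by rewrite tnth_mktuple; ring.
Qed.

Lemma Q_ge0 d n (u : 'rV[R]_n) (s : 'I_n -> d.-tuple R) w :
  0 <= \sum_(j < n) \sum_(k < n) u 0 j * u 0 k * cos (tdot w (tsub (s j) (s k))).
Proof.
have -> : \sum_(j < n) \sum_(k < n) u 0 j * u 0 k * cos (tdot w (tsub (s j) (s k))) =
  (\sum_(j < n) u 0 j * cos (tdot w (s j))) ^+ 2 +
  (\sum_(j < n) u 0 j * sin (tdot w (s j))) ^+ 2.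
  rewrite !expr2 !mulr_suml -big_split; apply: eq_bigr => j _.
  rewrite !mulr_sumr -big_split; apply: eq_bigr => k _.
  rewrite tdotB cosB /=; ring.
by apply: addr_ge0; apply: sqr_ge0.
Qed.

Lemma sum_pair (I J : finType) (F : I * J -> R) :
  \sum_(q : I * J) F q = \sum_i \sum_j F (i, j).
Proof. by rewrite pair_bigA; apply: eq_bigr => -[i j]. Qed.

Lemma quad_cmp d n (s : 'I_n -> d.-tuple R) (K1 K2 f1 f2 : d.-tuple R -> R)
  (a b : R) (u : 'rV[R]_n) :
  spectral_density K1 f1 -> spectral_density K2 f2 ->
  (forall w, a * f1 w <= b * f2 w) ->
  a * qf u (covmx K1 s) <= b * qf u (covmx K2 s).
Proof.
move=> [f10 mf1 if1 K1E _] [f20 mf2 if2 K2E _] ab.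
pose g (x : d.-tuple R) (f : d.-tuple R -> R) w := cos (tdot w x) * f w.
pose H (q : bool * ('I_n * 'I_n)) :=
  g (tsub (s q.2.1) (s q.2.2)) (if q.1 then f2 else f1).
pose co (q : bool * ('I_n * 'I_n)) :=
  (if q.1 then b else - a) * (u 0 q.2.1 * u 0 q.2.2).
have HP q : Pint (H q).
  by case: q => [[] p]; apply: Pint_cos.
have E : \sum_q co q * iint (H q) = b * qf u (covmx K2 s) - a * qf u (covmx K1 s).
  rewrite sum_pair big_bool /= !sum_pair; congr (_ + _).
    rewrite /qf mulr_sumr; apply: eq_bigr => j _.
    rewrite mulr_sumr; apply: eq_bigr => k _.
    by rewrite /co /H /g /= !mxE K2E; ring.
  rewrite /qf mulr_sumr -sumrN; apply: eq_bigr => j _.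
  rewrite mulr_sumr -sumrN; apply: eq_bigr => k _.
  by rewrite /co /H /g /= !mxE K1E; ring.
rewrite -subr_ge0 -E -iint_lin //.
apply: iint_ge0 => w.
have -> : \sum_q co q * H q w = (b * f2 w - a * f1 w) *
    \sum_(j < n) \sum_(k < n) u 0 j * u 0 k * cos (tdot w (tsub (s j) (s k))).
  rewrite sum_pair big_bool /= !sum_pair -big_split /= mulr_sumr.
  apply: eq_bigr => j _.
  rewrite -big_split /= mulr_sumr; apply: eq_bigr => k _.
  by rewrite /co /H /g /=; ring.
apply: mulr_ge0; first by rewrite subr_ge0.
exact: Q_ge0.
Qed.

Lemma qf_scale d n (u : 'rV[R]_n) (K : d.-tuple R -> R) (s : 'I_n -> d.-tuple R) c :
  qf u (covmx (fun x => c * K x) s) = c * qf u (covmx K s).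
Proof.
rewrite /qf mulr_sumr; apply: eq_bigr => j _.
rewrite mulr_sumr; apply: eq_bigr => k _.
by rewrite !mxE; ring.
Qed.

End Aux.

Theorem lemmaS2 (R : realType) (d n : nat)
  (K : R -> d.-tuple R -> R)          (* alpha |-> K_{alpha,nu}, nu fixed *)
  (f : R -> R -> d.-tuple R -> R)     (* (theta, alpha) |-> f_{theta,alpha,nu} *)
  (theta0 alpha0 L r0 kappa : R) (s : 'I_n -> d.-tuple R) :
  (* K_{alpha,nu} is a positive definite function for every alpha > 0 *)
  (forall alpha, 0 < alpha -> posdef_fun (K alpha)) ->
  (* f_{theta,alpha,nu} is the spectral density of theta K_{alpha,nu} *)
  (forall theta alpha, 0 < theta -> 0 < alpha ->
     spectral_density (fun x => theta * K alpha x) (f theta alpha)) ->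
  0 < theta0 -> 0 < alpha0 ->
  (* S_n: distinct points of [0,1]^d *)
  injective s ->
  (forall k (i : 'I_d), 0 <= tnth (s k) i <= 1) ->
  (* Assumption A2 (i) *)
  0 < L -> 0 < r0 < 2^-1 -> 0 < kappa ->
  (forall alpha, 0 < alpha -> `|alpha / alpha0 - 1| <= r0 ->
     forall w, `|f theta0 alpha w / f theta0 alpha0 w - 1|
               <= L * `|alpha / alpha0 - 1| `^ kappa) ->
  (* Assumption A2 (ii) *)
  (forall theta alpha1 alpha2 w, 0 < theta -> 0 < alpha1 -> alpha1 <= alpha2 ->
     f theta alpha2 w <= f theta alpha1 w) ->
  forall alpha, 0 < alpha ->
  let M := invmx (covmx (K alpha0) s) *m covmx (K alpha) s in
  [/\ (`|alpha / alpha0 - 1| <= r0 ->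
        forall lambda, eigenvalue M lambda ->
          1 - L * `|alpha / alpha0 - 1| `^ kappa <= lambda
          <= 1 + L * `|alpha / alpha0 - 1| `^ kappa),
      (alpha <= alpha0 -> forall lambda, eigenvalue M lambda -> 1 <= lambda)
    & (alpha0 <= alpha -> forall lambda, eigenvalue M lambda ->
          0 <= lambda <= 1)].
Proof.
move=> Kpd SD th0 al0 sinj s01 L0 r0b k0 A2i A2ii alpha al M.
set C0 := covmx (K alpha0) s; set C := covmx (K alpha) s.
have qpos (a : R) (u : 'rV[R]_n) : 0 < a -> u != 0 -> 0 < qf u (covmx (K a) s).
  move=> a0 u0; rewrite -qfE.
  have := Kpd a a0 n s sinj (u^T); rewrite trmxK; apply.
  by apply: contraNneq u0 => /(congr1 trmx); rewrite trmxK trmx0 => ->.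
have uC0 : C0 \in unitmx.
  rewrite unitmxE unitfE; apply/negP => /det0P [v v0 vC].
  have := qpos alpha0 v al0 v0; rewrite -/C0 -qfE vC mul0mx mxE.
  by rewrite ltxx.
have key lambda : eigenvalue M lambda -> exists u : 'rV[R]_n,
    [/\ 0 < qf u C0, 0 < qf u C & qf u C = lambda * qf u C0].
  move=> /eigenvalueP [v vM v0].
  pose u := v *m invmx C0.
  have vu : v = u *m C0 by rewrite /u mulmxKV.
  have u0 : u != 0.
    by apply: contraNneq v0 => u0; rewrite vu u0 mul0mx.
  exists u; split; [exact: qpos | exact: qpos |].
  have : u *m C = lambda *: (u *m C0).
    by rewrite -vu -vM /M /u mulmxA.
  move=> uC; rewrite -!qfE uC -scalemxAl mxE.
  by [].
set eps := L * `|alpha / alpha0 - 1| `^ kappa.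
have SD0 := SD theta0 alpha0 th0 al0.
have SD1 := SD theta0 alpha th0 al.
have G0 w : 0 < f theta0 alpha0 w.
  have [g0 _ _ _ _] := SD0.
  rewrite lt_neqAle g0 andbT; apply/negP => /eqP Gw.
  have := A2i alpha0 al0 _ w.
  rewrite divff ?lt0r_neq0 // subrr normr0 powR0 ?lt0r_neq0 // mulr0.
  move=> /(_ (ltW (andP r0b).1)); rewrite -Gw invr0 mulr0 sub0r normrN normr1.
  by rewrite ler10.
have cmp (a1 a2 : R) (g1 g2 : R) u :
    spectral_density (fun x => theta0 * K a1 x) (f theta0 a1) ->
    spectral_density (fun x => theta0 * K a2 x) (f theta0 a2) ->
    (forall w, g1 * f theta0 a1 w <= g2 * f theta0 a2 w) ->
    g1 * qf u (covmx (K a1) s) <= g2 * qf u (covmx (K a2) s).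
  move=> S1 S2 le12.
  have := quad_cmp s u S1 S2 le12.
  rewrite !qf_scale => H.
  by rewrite -(ler_pM2l th0) !mulrA ![theta0 * _]mulrC -!mulrA.
split.
- move=> ar0 lambda /key [u [q0 q1 qE]].
  have hw w : `|f theta0 alpha w / f theta0 alpha0 w - 1| <= eps := A2i alpha al ar0 w.
  apply/andP; split.
  + have := cmp alpha0 alpha (1 - eps) 1 u SD0 SD1.
    rewrite -/C0 -/C qE mul1r ler_pM2r //; apply => w.
    have := hw w; rewrite ler_norml => /andP [h1 _].
    rewrite mul1r -ler_pdivlMr //.
    move: h1; set t := _ / _; lra.
  + have := cmp alpha alpha0 1 (1 + eps) u SD1 SD0.
    rewrite -/C0 -/C qE mul1r ler_pM2r //; apply => w.
    have := hw w; rewrite ler_norml => /andP [_ h2].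
    rewrite mul1r -ler_pdivrMr //.
    move: h2; set t := _ / _; lra.
- move=> aa lambda /key [u [q0 q1 qE]].
  have := cmp alpha0 alpha 1 1 u SD0 SD1.
  rewrite -/C0 -/C qE !mul1r -{1}(mul1r (qf u C0)) ler_pM2r //; apply => w.
  by rewrite !mul1r; apply: A2ii.
- move=> aa lambda /key [u [q0 q1 qE]].
  apply/andP; split.
    by rewrite -(pmulr_lge0 _ q0) -qE ltW.
  have := cmp alpha alpha0 1 1 u SD1 SD0.
  rewrite -/C0 -/C qE !mul1r -{2}(mul1r (qf u C0)) ler_pM2r //; apply => w.
  by rewrite !mul1r; apply: A2ii.
Qed.
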